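(* Let $\mathcal{H}$ be a finite family of rooted digraphs. Let $D$ be a digraph, $k$ an integer, $W$ an $\mathcal{H}$-deletion set of $D$ with $|W|\le k+1$, and $\mathcal{S}=(S_1,\dots,S_q)$ an ordered partition of $W$. Let $Q$ be a set with $S_1\subseteq Q\subseteq V(D)\setminus(W\setminus S_1)$ such that $D[Q]$ contains no subgraph isomorphic to a graph of $\mathcal{H}$ and $N^+(Q)$ is a minimum $S_1$-$(W\setminus S_1)$ separator. Let $X$ be a solution of $(D,\mathcal{S},W,k)$ such that $R_D(S_1,X)\cap N^+(Q)=\emptyset$. Then there is a solution $X'$ for $(D,\mathcal{S},W,k)$ that contains $N^+(Q)$.
   Context: Subgraphs are not necessarily induced; strong components are maximal sets of mutually reachable vertices. A digraph is rooted if some vertex reaches all its vertices. $X$ is an $\mathcal{H}$-deletion set of $D$ if no strong component of $D-X$ contains a subgraph isomorphic to a graph in $\mathcal{H}$. A solution for $(D,\mathcal{S},W,k)$ is a set $X\subseteq V(D)$ with $|X|\le k$, $X\cap W=\emptyset$, $X$ an $\mathcal{H}$-deletion set, and $X$ intersecting every directed $S_i$-$S_j$ path in $D$ for all $i<j$. $N^+(Q)$ is the set of vertices outside $Q$ with an in-neighbour in $Q$. For disjoint $A,B$, an $A$-$B$ separator is a set $C$ disjoint from $A\cup B$ such that $D-C$ has no directed path from $A$ to $B$; it is minimum if of smallest size. $R_D(A,Y)$ is the set of vertices reachable from $A$ in $D-Y$. *)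

(* Defs.v *)
From Stdlib Require List.
From mathcomp Require Import all_boot.
Set Implicit Arguments. Unset Strict Implicit. Unset Printing Implicit Defensive.

Record digraph := Digraph { dvert : finType; darc : rel dvert }.
Arguments darc : clear implicits.

Definition rooted (H : digraph) : Prop :=
  exists r : dvert H, forall v : dvert H, connect (darc H) r v.

Section Defs.
Variables (V : finType) (E : rel V).

Definition arc_avoid (Y : {set V}) : rel V :=
  [rel x y | E x y && (x \notin Y) && (y \notin Y)].

Definition reach (Y : {set V}) (a v : V) : bool :=
  (a \notin Y) && connect (arc_avoid Y) a v.

Definition R_D (A Y : {set V}) : {set V} :=
  [set v | [exists a in A, reach Y a v]].

Definition same_strong (Y : {set V}) (x y : V) : bool :=
  reach Y x y && reach Y y x.

(* f witnesses that H is isomorphic to a (not necessarily induced) subgraph of D *)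
Definition sub_embedding (H : digraph) (f : dvert H -> V) : Prop :=
  injective f /\ forall u v, darc H u v -> E (f u) (f v).

Definition contains_in (Q : {set V}) (H : digraph) : Prop :=
  exists f : dvert H -> V, sub_embedding f /\ forall u, f u \in Q.

(* X is an H-deletion set: no strong component of D - X contains a subgraph
   isomorphic to a member of the family *)
Definition deletion_set (Hs : seq digraph) (X : {set V}) : Prop :=
  forall H, List.In H Hs -> forall f : dvert H -> V, sub_embedding f ->
    ~ ((forall u, f u \notin X) /\ (forall u v, same_strong X (f u) (f v))).

Definition out_nbhd (Q : {set V}) : {set V} :=
  [set v | (v \notin Q) && [exists u in Q, E u v]].

Definition separator (A B C : {set V}) : Prop :=
  [disjoint C & A :|: B] /\ forall a b, a \in A -> b \in B -> ~~ reach C a b.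

Definition min_separator (A B C : {set V}) : Prop :=
  separator A B C /\ forall C', separator A B C' -> #|C| <= #|C'|.

Definition hits_all_paths (A B X : {set V}) : Prop :=
  forall a b (p : seq V), a \in A -> b \in B -> path E a p -> last a p = b ->
    exists2 x, x \in a :: p & x \in X.

Definition ordered_partition (W : {set V}) (S : seq {set V}) : Prop :=
  [/\ 0 < size S,
      forall i, i < size S -> nth set0 S i != set0,
      forall i j, i < j < size S -> [disjoint nth set0 S i & nth set0 S j] &
      forall v, (v \in W) = [exists i : 'I_(size S), v \in nth set0 S i]].

Definition solution (Hs : seq digraph) (S : seq {set V}) (W : {set V}) (k : nat)
    (X : {set V}) : Prop :=
  [/\ #|X| <= k, [disjoint X & W], deletion_set Hs X &
      forall i j, i < j < size S -> hits_all_paths (nth set0 S i) (nth set0 S j) X].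

End Defs.

(* Main.v *)
Require Import Defs.
From Stdlib Require List.
From mathcomp Require Import all_boot.
From mathcomp Require Import zify.
Set Implicit Arguments. Unset Strict Implicit. Unset Printing Implicit Defensive.

Section H.
Variables (V : finType) (E : rel V).

Lemma closure_path (e : rel V) (A : pred V) x p :
  (forall u v, u \in A -> e u v -> v \in A) -> x \in A -> path e x p -> last x p \in A.
Proof.
move=> cl; elim: p x => //= z p IH x xA /andP[exz pz]; apply: IH => //; exact: cl exz.
Qed.

Lemma closure_conn (e : rel V) (A : pred V) x y :
  (forall u v, u \in A -> e u v -> v \in A) -> x \in A -> connect e x y -> y \in A.
Proof. move=> cl xA /connectP[p pp ->]. exact: (closure_path cl xA pp). Qed.

Lemma conn_transfer (e e' : rel V) a y :
  (forall u v, connect e a u -> e u v -> connect e v y -> e' u v) ->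
  connect e a y -> connect e' a y.
Proof.
move=> H /connectP[p pp yl].
suff: forall x, connect e a x -> connect e' a x -> path e x p ->
  last x p = y -> connect e' a y by move=> /(_ a); apply.
elim: p {pp yl} => [|z p IH] x /=; first by move=> _ ? _ <-.
move=> ca ca' /andP[exz pz] yl.
apply: (IH z) => //; first exact: connect_trans ca (connect1 exz).
apply: connect_trans ca' (connect1 _).
apply: H ca exz _; apply/connectP; by exists p.
Qed.

Lemma avoid_notin (Y : {set V}) x p : x \notin Y -> path (arc_avoid E Y) x p ->
  forall y, y \in x :: p -> y \notin Y.
Proof.
elim: p x => [|z p IH] x xY /=; first by move=> _ y; rewrite inE => /eqP->.
case/andP=> /andP[/andP[_ _] zY] pz y; rewrite inE => /orP[/eqP->//|]; exact: IH.
Qed.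

Lemma reach_notin (Y : {set V}) a v : reach E Y a v -> v \notin Y.
Proof.
case/andP=> aY; apply: (closure_conn (A := [pred w | w \notin Y])) => //.
by move=> u w _ /andP[_ wY].
Qed.

Lemma path_to_cut (P C : pred V) x p :
  (forall u v, u \in P -> E u v -> v \notin C -> v \in P) ->
  path E x p -> x \in P -> last x p \notin P -> exists2 y, y \in p & y \in C.
Proof.
move=> cl; elim: p x => [|z p IH] x /=; first by move=> _ ->.
case/andP=> exz pz xP lz; case zC: (z \in C); first by exists z; rewrite ?inE ?eqxx.
have [y yp yC] := IH z pz (cl _ _ xP exz (negbT zC)) lz.
by exists y; rewrite // inE yp orbT.
Qed.

End H.
Unset Implicit Arguments.

Theorem lemma11 (Hs : seq digraph) (V : finType) (E : rel V) (k : nat)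
    (W : {set V}) (S : seq {set V}) (Q X : {set V}) :
  (forall H, List.In H Hs -> rooted H) ->
  deletion_set E Hs W -> #|W| <= k.+1 ->
  ordered_partition W S ->
  let S1 := nth set0 S 0 in
  S1 \subset Q -> Q \subset ~: (W :\: S1) ->
  (forall H, List.In H Hs -> ~ contains_in E Q H) ->
  min_separator E S1 (W :\: S1) (out_nbhd E Q) ->
  solution E Hs S W k X ->
  R_D E S1 X :&: out_nbhd E Q = set0 ->
  exists X', solution E Hs S W k X' /\ out_nbhd E Q \subset X'.
Proof.
move=> _ _ _ [szS nS disj Wdef] S1 S1Q QW noH [[Cdisj Csep] Cmin] [Xk XW Xdel Xhit] RC.
have S1W : forall v, v \in S1 -> v \in W.
  by move=> v vS; rewrite Wdef; apply/existsP; exists (Ordinal szS).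
have XnW : forall v, v \in X -> v \notin W.
  by move: XW; rewrite disjoint_subset => /subsetP H v /H.
set C := out_nbhd E Q.
have CnW : forall v, v \in C -> v \notin W.
  move: Cdisj; rewrite disjoint_subset => /subsetP H v /H; rewrite !inE.
  by apply: contra => vW; rewrite vW andbT; case: (v \in S1).
have CnQ : forall v, v \in C -> v \notin Q by move=> v; rewrite inE => /andP[].
have S1Q' := subsetP S1Q.
set Q' := R_D E S1 C.
have Q'Q : forall v, v \in Q' -> v \in Q.
  move=> v; rewrite inE => /existsP[a /andP[aS /andP[aC c]]].
  apply: (closure_conn (A := [pred w | w \in Q]) _ _ c); last exact: S1Q'.
  move=> u w uQ /andP[/andP[euw _] wC]; apply/negPn; apply: contra wC => wQ.
  by rewrite inE wQ; apply/existsP; exists u; rewrite uQ.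
have Q'C : forall v, v \in Q' -> v \notin C.
  by move=> v /Q'Q vQ; apply/negP => /CnQ; rewrite vQ.
have Q'cl : forall u w, u \in Q' -> E u w -> w \notin C -> w \in Q'.
  move=> u w uQ' euw wC; have uC := Q'C _ uQ'.
  move: uQ'; rewrite inE => /existsP[a /andP[aS /andP[aC c]]].
  rewrite inE; apply/existsP; exists a; rewrite aS /reach aC /=.
  by apply: connect_trans c (connect1 _); rewrite /arc_avoid /= euw uC wC.
set R := R_D E S1 X.
have RnC : forall v, v \in R -> v \notin C.
  move=> v vR; apply/negP => vC.
  by have := in_set0 v; rewrite -RC in_setI vR vC.
have Rreach : forall a v, a \in S1 -> reach E X a v -> v \in R.
  by move=> a v aS rv; rewrite inE; apply/existsP; exists a; rewrite aS.
have RQ' : forall v, v \in R -> v \in Q'.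
  move=> v vR; have := vR; rewrite inE => /existsP[a /andP[aS /andP[aX c]]].
  have aC : a \notin C by apply: (contra (CnW a)); rewrite negbK S1W.
  rewrite inE; apply/existsP; exists a; rewrite aS /reach aC /=.
  apply: (conn_transfer (e := arc_avoid E X)) c => u w cu /andP[/andP[euw uX] wX] cw.
  have uR : u \in R by apply: (Rreach a) => //; rewrite /reach aX.
  have wR : w \in R.
    apply: (Rreach a) => //; rewrite /reach aX; apply: connect_trans cu (connect1 _).
    by rewrite /arc_avoid /= euw uX wX.
  by rewrite /arc_avoid /= euw !RnC.
have Rcl : forall u w, u \in R -> E u w -> w \notin X -> w \in R.
  move=> u w; rewrite inE => /existsP[a /andP[aS ru]] euw wX.
  apply: (Rreach a) => //; move: (ru) => /andP[aX c]; rewrite /reach aX.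
  by apply: connect_trans c (connect1 _); rewrite /arc_avoid /= euw wX (reach_notin ru).
set N := out_nbhd E R.
have NX : forall v, v \in N -> v \in X.
  move=> v; rewrite inE => /andP[vR /existsP[u /andP[uR euv]]].
  by apply/negPn; apply: contra vR => vX; apply: Rcl euv vX.
have Nsep : separator E S1 (W :\: S1) N.
  split.
    rewrite disjoint_subset; apply/subsetP => v /NX /XnW.
    rewrite !inE; apply: contra => /orP[/S1W //|/andP[]//].
  move=> a b aS; rewrite in_setD => /andP[bS1 bW]; apply/negP => /andP[aN c].
  have bR : b \in R.
    apply: (closure_conn (A := [pred w | w \in R]) _ _ c).
      move=> u w uR /andP[/andP[euw _] wN] /=; apply/negPn; apply: contra wN => wR.
      by rewrite inE wR /=; apply/existsP; exists u; rewrite uR.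
    by apply: (Rreach a) => //; rewrite /reach connect0 andbT; apply: contra (XnW a) _; rewrite negbK S1W.
  move: bR; rewrite inE => /existsP[a' /andP[a'S /andP[a'X /connectP[p pp bl]]]].
  move: bW; rewrite Wdef => /existsP[i bi].
  have i0 : 0 < i.
    rewrite lt0n; apply/negP => /eqP i0; move: bi; rewrite i0 => bi.
    by rewrite bi in bS1.
  have i0S : 0 < i < size S by rewrite i0 ltn_ord.
  have [x xin xX] := Xhit 0 i i0S a' b p a'S bi
    (sub_path (fun u w => (fun H => (andP (andP H).1).1)) pp) (esym bl).
  by move: (avoid_notin a'X pp xin); rewrite xX.
have CN : #|C| <= #|N| by apply: Cmin.
have sub1 : N :\: C \subset X :&: Q'.
  apply/subsetP => v; rewrite in_setD in_setI => /andP[vC vN]; rewrite NX //=.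
  move: vN; rewrite inE => /andP[_ /existsP[u /andP[uR euv]]].
  by apply: Q'cl euv vC; apply: RQ'.
have sub2 : C :\: X \subset C :\: N.
  apply/subsetP => v; rewrite !in_setD => /andP[vX ->]; rewrite andbT.
  by apply: contra vX; apply: NX.
exists ((X :\: Q') :|: C); split; last by apply/subsetP => v vC; rewrite in_setU vC orbT.
split.
- have sub3 : (X :\: Q') :|: C \subset (X :\: Q') :|: (C :\: X).
    apply/subsetP => v; rewrite !in_setU !in_setD => /orP[->//|vC].
    case vX: (v \in X); last by rewrite vC orbT.
    by rewrite (negbTE (contra (Q'C v) _)) // vC.
  have e1 := cardsID Q' X. have e2 := cardsID N C. have e3 := cardsID C N.
  have e4 := cardsU (X :\: Q') (C :\: X).
  have l1 := subset_leq_card sub1. have l2 := subset_leq_card sub2.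
  have l3 := subset_leq_card sub3. rewrite setIC in e2.
  apply: leq_trans Xk. lia.
- rewrite disjoint_subset; apply/subsetP => v; rewrite in_setU in_setD.
  by case/orP => [/andP[_ /XnW]|/CnW] Hv; rewrite inE.
- move=> H HH f emb [fX' fss].
  have Q'clX : forall u y, u \in Q' -> connect (arc_avoid E ((X :\: Q') :|: C)) u y -> y \in Q'.
    move=> u y uQ c; apply: (closure_conn (A := [pred w | w \in Q']) _ uQ c).
    move=> u' w uQ' /andP[/andP[euw _] wX'] /=; apply: Q'cl euw _ => //.
    by apply: contra wX' => wC; rewrite in_setU wC orbT.
  case: (boolP [exists u, f u \in Q']).
    case/existsP => u fu; apply: (noH H HH); exists f; split => // v.
    apply: Q'Q; apply: Q'clX fu _.
    by case/andP: (fss u v) => /andP[_ c] _.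
  rewrite negb_exists => /forallP nQ.
  have fX : forall u, f u \notin X.
    move=> u; apply/negP => fuX; move: (fX' u); rewrite in_setU in_setD fuX.
    by rewrite (negbTE (nQ u)).
  have rX : forall u v, reach E X (f u) (f v).
    move=> u v; rewrite /reach fX /=.
    case/andP: (fss u v) => /andP[_ c] _.
    apply: (conn_transfer (e := arc_avoid E ((X :\: Q') :|: C))) c => u' w cu /andP[/andP[euw u'X] wX] cw.
    have wQ : w \notin Q' by apply/negP => wQ; move: (nQ v); rewrite (Q'clX _ _ wQ cw).
    have uQ : u' \notin Q'.
      apply/negP => uQ; move: (nQ v); rewrite (Q'clX _ _ uQ _) //.
      by apply: connect_trans (connect1 _) cw; rewrite /arc_avoid /= euw u'X wX.
    rewrite /arc_avoid /= euw; apply/andP; split.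
      by apply: contra u'X => ?; rewrite in_setU in_setD uQ; apply/orP; left.
    by apply: contra wX => ?; rewrite in_setU in_setD wQ; apply/orP; left.
  apply: (Xdel H HH f emb); split => // u v; apply/andP; split; exact: rX.
- move=> i j ij a b p aS bS pp bl.
  have [x xin xX] := Xhit i j ij a b p aS bS pp bl.
  case xQ: (x \in Q'); last by exists x; rewrite // in_setU in_setD xQ xX.
  have j0 : 0 < j by case/andP: ij => /(leq_ltn_trans (leq0n i)).
  have bnQ : b \notin Q'.
    apply/negP => /Q'Q bQ; move: (subsetP QW b bQ); rewrite in_setC in_setD.
    have jS : j < size S by case/andP: ij.
    have -> : b \in W by rewrite Wdef; apply/existsP; exists (Ordinal jS).
    rewrite andbT negbK => bS1.
    have j0S : 0 < j < size S by rewrite j0; case/andP: ij.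
    have := disj 0 j j0S.
    by rewrite disjoint_subset => /subsetP /(_ b bS1); rewrite inE bS.
  move: pp bl; case/splitPl: xin => p1 p2 xl.
  rewrite cat_path last_cat xl => /andP[_ p2p] bl.
  have lnQ : last x p2 \notin Q' by rewrite bl.
  have [y yin yC] := path_to_cut (P := mem Q') (C := mem C) (fun u w uq euw wc => Q'cl u w uq euw wc) p2p xQ lnQ.
  by exists y; rewrite ?in_setU ?yC ?orbT // inE mem_cat yin !orbT.
Qed.
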